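(* Let $\mathbb{F} = \mathbb{F}_0(\omega)$ be a degree-$2$ extension field of a field $\mathbb{F}_0$. Let $h,d,m,n$ be nonnegative integers satisfying $0 \le h \le d \le n$, and let $A,B \in \mathbb{F}_0^{d \times n}$ and $P \in \mathbb{F}_0^{m \times n}$ be such that $\operatorname{rank}\begin{pmatrix} A+\omega B \\ P \end{pmatrix} = m+d$, $\operatorname{rank}(P) = m$ and $\operatorname{rank}\begin{pmatrix} A \\ B \\ P \end{pmatrix} \le m+2d-h$. Then there exist matrices $A',B' \in \mathbb{F}_0^{d \times n}$ such that $\begin{pmatrix} A+\omega B \\ P \end{pmatrix}$ and $\begin{pmatrix} A'+\omega B' \\ P \end{pmatrix}$ are row-equivalent and $B'$ has $h$ zero rows.
   Context: Here $\begin{pmatrix} X \\ Y \end{pmatrix}$ denotes the matrix obtained by stacking $X$ on top of $Y$. Row-equivalence means one matrix is obtained from the other by elementary row operations (over $\mathbb{F}$). *)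

(* Defs.v *)
From HB Require Import structures.
From mathcomp Require Import all_boot all_order all_algebra all_field.
Set Implicit Arguments. Unset Strict Implicit. Unset Printing Implicit Defensive.
Import GRing.Theory.
Local Open Scope ring_scope.

Definition row_equiv (K : fieldType) (r c : nat) (M M' : 'M[K]_(r, c)) : Prop :=
  exists U : 'M[K]_r, U \in unitmx /\ M' = U *m M.

Definition has_zero_rows (K : fieldType) (r c : nat) (M : 'M[K]_(r, c)) (h : nat) : Prop :=
  exists S : {set 'I_r}, #|S| = h /\ forall i, i \in S -> row i M = 0.

(* Main.v *)
Require Import Defs.
From HB Require Import structures.
From mathcomp Require Import all_boot all_order all_algebra all_field.
From mathcomp Require Import zify.
Import GRing.Theory.
Local Open Scope ring_scope.

Section Basics.
Variables (F0 : fieldType) (F : fieldExtType F0) (w : F).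
Hypotheses (hdim : \dim {:F} = 2%N) (hgen : <<1%VS; w>>%VS = fullv).

Lemma w_notin1 : w \notin 1%VS.
Proof.
apply/negP => /Fadjoin_idP h1; move: hdim; rewrite -hgen h1 dimv1. by [].
Qed.

Lemma indep (a b : F0) : a%:A + b *: w = 0 -> a = 0 /\ b = 0.
Proof.
move=> H.
have b0 : b = 0.
  apply/eqP; apply: contraT => nb; case/negP: w_notin1.
  have -> : w = b^-1 *: (b *: w) by rewrite scalerA mulVf // scale1r.
  have -> : b *: w = - a%:A by apply/eqP; rewrite -addr_eq0 addrC H.
  by rewrite scalerN rpredN !rpredZ // mem1v.
split=> //; move: H; rewrite b0 scale0r addr0 => /eqP.
by rewrite scaler_eq0 oner_eq0 orbF => /eqP.
Qed.

Lemma decomp (x : F) : exists p : F0 * F0, x == p.1%:A + p.2 *: w.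
Proof.
have fr : free [:: w; 1%R : F].
  by rewrite free_cons seq1_free oner_neq0 andbT span_seq1 w_notin1.
have full : <<[:: w; 1%R : F]>>%VS = fullv.
  by apply/eqP; rewrite eqEdim subvf (eqP fr) hdim.
have : x \in <<[:: w; 1%R : F]>>%VS by rewrite full memvf.
rewrite span_cons span_seq1 => /memv_addP [u /vlineP [b ->] [v /vlineP [a ->] ->]].
by exists (a, b); rewrite addrC.
Qed.

End Basics.
Arguments indep {F0 F w} hdim hgen {a b}.
Arguments decomp {F0 F w} hdim hgen x.

Section Key.
Variables (F0 : fieldType) (F : fieldExtType F0) (w : F) (al be : F0).
Hypothesis hw : w * w = al%:A + be *: w.
Local Notation ph := (map_mx (in_alg F)).

Lemma key (r d m n : nat) (U1 U2 : 'M[F0]_(r,d)) (U3 : 'M[F0]_(r,m))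
  (A B : 'M[F0]_(d,n)) (P : 'M[F0]_(m,n)) :
  row_mx (ph U1 + w *: ph U2) (w *: ph U3) *m col_mx (ph A + w *: ph B) (ph P)
  = ph (U1 *m A + al *: (U2 *m B)) + w *: ph (U1 *m B + U2 *m (A + be *: B) + U3 *m P).
Proof.
rewrite mul_row_col !mulmxDl !mulmxDr -!scalemxAl -!scalemxAr !scalerA hw.
rewrite !map_mxD !map_mxZ !map_mxM !scalerDl !scalerDr !scalerA !mulr_algr.
by rewrite !addrA; congr (_ + _ + _); rewrite -!addrA; congr (_ + _); rewrite addrA addrC.
Qed.

End Key.
Arguments key {F0 F w al be} hw {r d m n}.

Lemma sub_colu (K : fieldType) (a b n : nat) (X : 'M[K]_(a,n)) (Y : 'M[K]_(b,n)) :
  (X <= col_mx X Y)%MS.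
Proof. by rewrite -addsmxE addsmxSl. Qed.

Lemma sub_cold (K : fieldType) (a b n : nat) (X : 'M[K]_(a,n)) (Y : 'M[K]_(b,n)) :
  (Y <= col_mx X Y)%MS.
Proof. by rewrite -addsmxE addsmxSr. Qed.
Arguments sub_colu {K a b n}.
Arguments sub_cold {K a b n}.

Theorem lemma3p4 (F0 : fieldType) (F : fieldExtType F0) (w : F)
  (hdim : \dim {:F} = 2%N) (hgen : <<1%VS; w>>%VS = fullv)
  (h d m n : nat) (hhd : (h <= d)%N) (hdn : (d <= n)%N)
  (A B : 'M[F0]_(d, n)) (P : 'M[F0]_(m, n))
  (hrk1 : \rank (col_mx (map_mx (in_alg F) A + w *: map_mx (in_alg F) B)
                        (map_mx (in_alg F) P)) = (m + d)%N)
  (hrkP : \rank P = m)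
  (hrk2 : (\rank (col_mx A (col_mx B P)) <= m + 2 * d - h)%N) :
  exists A' B' : 'M[F0]_(d, n),
    row_equiv (col_mx (map_mx (in_alg F) A + w *: map_mx (in_alg F) B)
                      (map_mx (in_alg F) P))
              (col_mx (map_mx (in_alg F) A' + w *: map_mx (in_alg F) B')
                      (map_mx (in_alg F) P))
    /\ has_zero_rows B' h.
Proof.
have [k ek] : exists k, d = (h + k)%N by exists (d - h)%N; rewrite subnKC.
subst d.
have [c hc] : exists c : F -> F0 * F0, forall x, x = (c x).1%:A + (c x).2 *: w.
  exists (fun x => sval (sigW (decomp hdim hgen x))) => x.
  exact/eqP/(svalP (sigW (decomp hdim hgen x))).
have c2alg : forall a : F0, (c a%:A).2 = 0.
  move=> a; have H : ((c a%:A).1 - a)%:A + (c a%:A).2 *: w = 0.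
    by rewrite scalerBl addrAC -hc subrr.
  exact: (indep hdim hgen H).2.
pose al := (c (w * w)).1; pose be := (c (w * w)).2.
have hw : w * w = al%:A + be *: w by apply: hc.
set M := col_mx _ _.
have Mfree : row_free M by rewrite /row_free hrk1 addnC.
pose K0 := col_mx B (col_mx (A + be *: B) P).
pose L := col_mx A (col_mx (al *: B) (0 : 'M[F0]_(m,n))).
have uK0 : forall r (u : 'M_(r, (h + k) + ((h + k) + m))), u *m K0 =
    lsubmx u *m B + lsubmx (rsubmx u) *m (A + be *: B) + rsubmx (rsubmx u) *m P.
  move=> r u; rewrite -{1}(hsubmxK u) mul_row_col -{1}(hsubmxK (rsubmx u)).
  by rewrite mul_row_col addrA.
have uL : forall r (u : 'M_(r, (h + k) + ((h + k) + m))), u *m L =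
    lsubmx u *m A + al *: (lsubmx (rsubmx u) *m B).
  move=> r u; rewrite -{1}(hsubmxK u) mul_row_col -{1}(hsubmxK (rsubmx u)).
  by rewrite mul_row_col mulmx0 addr0 scalemxAr.
have rat : forall r (u : 'M_(r, (h + k) + ((h + k) + m))), u *m K0 = 0 ->
    (map_mx (in_alg F) (u *m L) <= M)%MS /\ ((u *m L <= P)%MS -> u = 0).
  move=> r u uK.
  have E := key hw (lsubmx u) (lsubmx (rsubmx u)) (rsubmx (rsubmx u)) A B P.
  rewrite -uK0 uK map_mx0 scaler0 addr0 -uL in E.
  split; first by rewrite -E submxMl.
  case/submxP=> z hz; move: E; rewrite hz map_mxM.
  have -> : map_mx (in_alg F) z *m map_mx (in_alg F) P
            = row_mx 0 (map_mx (in_alg F) z) *m M by rewrite mul_row_col mul0mx add0r.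
  move/(row_free_inj Mfree)/eq_row_mx => [E1 E2].
  have z1 : forall i j, lsubmx u i j = 0 /\ lsubmx (rsubmx u) i j = 0.
    move=> i j; apply: (indep hdim hgen).
    by move/matrixP: E1 => /(_ i j); rewrite !mxE /= mulr_algr.
  have z3 : forall i j, rsubmx (rsubmx u) i j = 0.
    move=> i j; apply: (@indep _ _ w hdim hgen (- z i j) _ _).2.
    move/matrixP: E2 => /(_ i j); rewrite !mxE /= mulr_algr => ->.
    by rewrite scaleNr addNr.
  have l0 : lsubmx u = 0 by apply/matrixP => i j; rewrite (z1 i j).1 mxE.
  have r0 : rsubmx u = 0.
    rewrite -(hsubmxK (rsubmx u)).
    have -> : lsubmx (rsubmx u) = 0 by apply/matrixP => i j; rewrite (z1 i j).2 mxE.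
    have -> : rsubmx (rsubmx u) = 0 by apply/matrixP => i j; rewrite z3 mxE.
    exact: row_mx0.
  by rewrite -(hsubmxK u) l0 r0 row_mx0.
pose Ker := kermx K0.
have KerK0 : forall r (y : 'M_(r, (h + k) + ((h + k) + m))), (y *m Ker) *m K0 = 0.
  by move=> r y; rewrite -mulmxA mulmx_ker mulmx0.
pose Z := Ker *m L.
have ZP : (Z :&: P)%MS = 0.
  apply/eqP; rewrite -submx0.
  have /submxP [y hy] : ((Z :&: P) <= Z)%MS := capmxSl _ _.
  have := (rat _ _ (KerK0 _ y)).2; rewrite -mulmxA -/Z -hy capmxSr => /(_ isT) y0.
  by rewrite hy /Z mulmxA y0 mul0mx sub0mx.
have rkZ : \rank Z = \rank Ker.
  have := mxrank_mul_ker Ker L.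
  have -> : (Ker :&: kermx L)%MS = 0.
    apply/eqP; rewrite -submx0.
    have /submxP [y hy] := capmxSl Ker (kermx L).
    have [_ H] := rat _ _ (KerK0 _ y).
    have y0 : y *m Ker = 0.
      apply: H; rewrite -hy.
      have -> : (Ker :&: kermx L)%MS *m L = 0 by apply/sub_kermxP; apply: capmxSr.
      exact: sub0mx.
    by rewrite hy y0 sub0mx.
  by rewrite mxrank0 addn0.
have rkKer : (h <= \rank Ker)%N.
  rewrite mxrank_ker.
  have : (\rank K0 <= \rank (col_mx A (col_mx B P)))%N.
    apply: mxrankS; rewrite !col_mx_sub.
    have sA : (A <= col_mx A (col_mx B P))%MS by apply: sub_colu.
    have sB : (B <= col_mx A (col_mx B P))%MS.
      exact: submx_trans (sub_colu _ _) (sub_cold _ _).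
    have sP : (P <= col_mx A (col_mx B P))%MS.
      exact: submx_trans (sub_cold _ _) (sub_cold _ _).
    by rewrite sB sP addmx_sub // scalemx_sub.
  move: hrk2; lia.
pose R : 'M[F0]_(h, n) := pid_mx h *m row_base Z.
have rkR : \rank R = h.
  by rewrite mxrankMfree ?row_base_free // rank_pid_mx // rkZ.
have RZ : (R <= Z)%MS by rewrite (submx_trans (submxMl _ _)) // eq_row_base.
have RP : \rank (col_mx R P) = (h + m)%N.
  have := mxrank_sum_cap R P; rewrite addsmxE.
  have -> : (R :&: P)%MS = 0.
    by apply/eqP; rewrite -submx0 -ZP capmxS.
  by rewrite mxrank0 addn0 rkR hrkP.
have phRM : (map_mx (in_alg F) R <= M)%MS.
  have /submxP [y hy] := RZ.
  rewrite hy /Z mulmxA; exact: (rat _ _ (KerK0 _ y)).1.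
pose S := col_mx (map_mx (in_alg F) R) (map_mx (in_alg F) P).
have rkS : \rank S = (h + m)%N by rewrite /S -map_col_mx mxrank_map.
have SM : (S <= M)%MS by rewrite col_mx_sub phRM sub_cold.
pose D := (M :\: S)%MS.
have rkD : \rank D = k.
  have := mxrank_cap_compl M S; rewrite (capmx_idPr SM) rkS hrk1 -/D; lia.
have [X [rkX XD]] : exists X : 'M[F]_(k, n), \rank X = k /\ (X <= D)%MS.
  move: (row_base D) (eq_row_base D); rewrite rkD => Y eY.
  by exists Y; split; [rewrite eY rkD | rewrite eY submx_refl].
pose T := col_mx (map_mx (in_alg F) R) X.
pose M' := col_mx T (map_mx (in_alg F) P).
have XM : (X <= M)%MS by apply: submx_trans XD (diffmxSl _ _).
have M'M : (M' <= M)%MS by rewrite !col_mx_sub phRM XM sub_cold.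
have rkM' : \rank M' = (h + k + m)%N.
  apply/eqP; rewrite eqn_leq rank_leq_row /=.
  have : (S + X <= M')%MS.
    rewrite addsmx_sub col_mx_sub (submx_trans (sub_colu _ _) (sub_colu _ _)).
    by rewrite sub_cold (submx_trans (sub_cold _ _) (sub_colu _ _)).
  move/mxrankS; apply: leq_trans.
  have := mxrank_sum_cap S X; rewrite rkS rkX.
  have -> : (S :&: X)%MS = 0.
    by apply/eqP; rewrite -submx0 -(capmx_diff M S) capmxC capmxS.
  rewrite mxrank0 addn0 => ->; lia.
pose A' := map_mx (fun x => (c x).1) T.
pose B' := map_mx (fun x => (c x).2) T.
have hT : map_mx (in_alg F) A' + w *: map_mx (in_alg F) B' = T.
  by apply/matrixP => i j; rewrite !mxE /= mulr_algr -hc.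
exists A', B'; split.
  exists (M' *m pinvmx M); split; last by rewrite hT mulmxKpV.
  rewrite -row_free_unit /row_free eqn_leq rank_leq_row /=.
  by rewrite -{1}rkM' -{1}(mulmxKpV M'M) mxrankM_maxl.
exists [set lshift k i | i : 'I_h]; split.
  by rewrite card_imset ?card_ord //; exact: lshift_inj.
move=> i /imsetP [i0 _ ->]; apply/rowP => j.
rewrite mxE /B' [LHS]mxE col_mxEu.
have -> : map_mx (in_alg F) R i0 j = (R i0 j)%:A by rewrite mxE.
by rewrite c2alg mxE.
Qed.
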